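(* Consider the SMCP instance with $|V|=4$ and $p_{uv}=p=0.64$ for all six pairs. The maximum, over all online algorithms, of the expected size of the matching produced equals $$p+p^2+(1-p)p(1+p)+(1-p)^2p(1+p)+(1-p)^3\big(1-(1-p)^3\big)\approx 1.607.$$
   Context: SMCP: vertex set $V$, probabilities $p_{uv}$ for unordered pairs; the random graph $G$ contains each pair independently with probability $p_{uv}$. An online algorithm knows $V$ and the $p_{uv}$ but not $G$; it repeatedly (adaptively, possibly randomly) probes a not-yet-probed pair of currently unmatched vertices; if the pair is an edge of $G$ it must be added to the matching and both endpoints become matched, otherwise both remain available. *)

(* Defs.v *)
From Stdlib Require Import Reals List Arith Bool.
Import ListNotations.
Open Scope R_scope.

(** SMCP on the complete graph with vertex set V = {0,1,2,3}.
    The six unordered pairs are indexed 0..5. *)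
Definition pairs : list (nat * nat) :=
  [(0,1); (0,2); (0,3); (1,2); (1,3); (2,3)]%nat.

Definition pair_at (e : nat) : nat * nat := nth e pairs (0%nat, 0%nat).

(** A history: the sequence of probes made so far (pair index, outcome:
    true = the pair is an edge of G, hence added to the matching). *)
Definition history := list (nat * bool).

Definition matched (h : history) (v : nat) : bool :=
  existsb (fun eb => snd eb &&
     (Nat.eqb (fst (pair_at (fst eb))) v || Nat.eqb (snd (pair_at (fst eb))) v)) h.

Definition probed (h : history) (e : nat) : bool :=
  existsb (fun eb => Nat.eqb (fst eb) e) h.

Definition valid (h : history) (e : nat) : bool :=
  Nat.ltb e 6 && negb (probed h e)
  && negb (matched h (fst (pair_at e))) && negb (matched h (snd (pair_at e))).

(** A (possibly randomized, adaptive) online algorithm: given the history,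
    a probability distribution (weights) over the next pair to probe. *)
Definition policy := history -> nat -> R.

(** Admissibility: the weights form a probability distribution on the valid
    pairs whenever some pair can still be probed (the algorithm keeps probing
    as long as possible). *)
Definition admissible (pol : policy) : Prop :=
  forall h : history,
    (forall e, (e < 6)%nat -> 0 <= pol h e) /\
    (forall e, (e < 6)%nat -> valid h e = false -> pol h e = 0) /\
    ((exists e, valid h e = true) -> sum_f_R0 (pol h) 5 = 1).

(** Expected number of further matched edges, when every pair is an edge
    independently with probability p; fuel bounds the number of probes. *)
Fixpoint exp_value (p : R) (fuel : nat) (pol : policy) (h : history) : R :=
  match fuel with
  | O => 0
  | S f => sum_f_R0 (fun e => pol h e *
             (p * (1 + exp_value p f pol (h ++ [(e, true)]))
              + (1 - p) * exp_value p f pol (h ++ [(e, false)]))) 5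
  end.

(** Expected size of the matching produced by pol (at most 6 probes occur). *)
Definition expected_matching (p : R) (pol : policy) : R := exp_value p 6 pol [].

(* Main.v *)
Require Import Defs.
From Stdlib Require Import Reals QArith Qreals Lra Lia List.
Import ListNotations.
Open Scope R_scope.

Definition pQ : Q := 64 # 100.
Definition valQ (a c : Q) : Q := Qred (pQ * (1 + a) + (1 - pQ) * c)%Q.
Definition Qmax' (a b : Q) : Q := if Qle_bool a b then b else a.
Definition step (h : history) (f : nat -> Q) (acc : Q) (e : nat) : Q :=
  if valid h e then Qmax' acc (f e) else acc.
Definition maxover h f :=
  step h f (step h f (step h f (step h f (step h f (step h f 0%Q 0) 1) 2) 3) 4) 5.
Fixpoint optQ (n : nat) (h : history) : Q :=
  match n with O => 0%Q | S m =>
    maxover h (fun e => valQ (optQ m (h ++ [(e, true)])) (optQ m (h ++ [(e, false)])))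
  end.
Definition firstb (h : history) (e : nat) : bool :=
  valid h e && forallb (fun e' => negb (valid h e')) (seq 0 e).
Definition sumQ h (f : nat -> Q) : Q :=
  let t e := if firstb h e then f e else 0%Q in
  (t 0%nat + t 1%nat + t 2%nat + t 3%nat + t 4%nat + t 5%nat)%Q.
Fixpoint evalQ (n : nat) (h : history) : Q :=
  match n with O => 0%Q | S m =>
    sumQ h (fun e => valQ (evalQ m (h ++ [(e, true)])) (evalQ m (h ++ [(e, false)])))
  end.
Definition pR : R := 64/100.

Lemma Q2R_pQ : Q2R pQ = pR.
Proof. unfold Q2R, pQ, pR; simpl. lra. Qed.

Lemma Q2R_valQ a c : Q2R (valQ a c) = pR * (1 + Q2R a) + (1 - pR) * Q2R c.
Proof.
  unfold valQ. rewrite (Qeq_eqR _ _ (Qred_correct _)). rewrite Q2R_plus, !Q2R_mult, Q2R_plus, Q2R_minus, Q2R_pQ.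
  replace (Q2R 1) with 1 by (unfold Q2R; simpl; lra). reflexivity.
Qed.

Lemma Q2R_0 : Q2R 0 = 0.
Proof. unfold Q2R; simpl; lra. Qed.

Lemma Qmax_l a b : Q2R a <= Q2R (Qmax' a b).
Proof.
  unfold Qmax'. destruct (Qle_bool a b) eqn:E.
  - apply Qle_Rle. apply Qle_bool_iff. exact E.
  - lra.
Qed.
Lemma Qmax_r a b : Q2R b <= Q2R (Qmax' a b).
Proof.
  unfold Qmax'. destruct (Qle_bool a b) eqn:E.
  - lra.
  - apply Qle_Rle. apply Qlt_le_weak. apply Qnot_le_lt.
    intro H. apply Qle_bool_iff in H. congruence.
Qed.

Lemma step_mono h f acc e x : x <= Q2R acc -> x <= Q2R (step h f acc e).
Proof.
  unfold step; destruct (valid h e); intro; [eapply Rle_trans; [eassumption|apply Qmax_l]|auto].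
Qed.
Lemma step_hit h f acc e : valid h e = true -> Q2R (f e) <= Q2R (step h f acc e).
Proof. unfold step; intros ->; apply Qmax_r. Qed.

Lemma maxover_ge h f e : (e < 6)%nat -> valid h e = true -> Q2R (f e) <= Q2R (maxover h f).
Proof.
  intros He V. unfold maxover.
  do 6 (destruct e as [|e]; [
    repeat (first [apply step_hit; assumption | apply step_mono]) | ]); lia.
Qed.
Lemma maxover_nonneg h f : 0 <= Q2R (maxover h f).
Proof. unfold maxover. repeat apply step_mono. rewrite Q2R_0; lra. Qed.

Lemma optQ_nonneg n h : 0 <= Q2R (optQ n h).
Proof. destruct n; simpl. rewrite Q2R_0; lra. apply maxover_nonneg. Qed.

Lemma ub pol : admissible pol -> forall n h, exp_value pR n pol h <= Q2R (optQ n h).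
Proof.
  intros Hp n. induction n as [|n IH]; intro h.
  - simpl. rewrite Q2R_0; lra.
  - cbn [exp_value optQ sum_f_R0].
    set (M := Q2R (maxover h _)).
    assert (HM : 0 <= M) by apply maxover_nonneg.
    destruct (Hp h) as [Hnn [Hinv Hsum]].
    assert (K : forall e, (e < 6)%nat ->
      pol h e * (pR * (1 + exp_value pR n pol (h ++ [(e, true)]))
                 + (1 - pR) * exp_value pR n pol (h ++ [(e, false)])) <= pol h e * M).
    { intros e He. destruct (valid h e) eqn:V.
      - apply Rmult_le_compat_l; [now apply Hnn|].
        eapply Rle_trans.
        2:{ unfold M. apply (maxover_ge h (fun e => valQ (optQ n (h ++ [(e, true)])) (optQ n (h ++ [(e, false)]))) e He V). }
        rewrite Q2R_valQ. unfold pR in *.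
        pose proof (IH (h ++ [(e, true)])). pose proof (IH (h ++ [(e, false)])). nra.
      - rewrite (Hinv e He V). lra. }
    assert (S1 : sum_f_R0 (pol h) 5 <= 1).
    { destruct (valid h 0 || valid h 1 || valid h 2 || valid h 3 || valid h 4 || valid h 5)%bool eqn:E.
      - rewrite Hsum; [lra|].
        repeat (apply Bool.orb_true_iff in E; destruct E as [E|E]); eexists; exact E.
      - repeat (apply Bool.orb_false_iff in E; destruct E as [E ?]).
        simpl. rewrite !Hinv by (auto; lia). lra. }
    simpl in S1.
    pose proof (K 0%nat ltac:(lia)). pose proof (K 1%nat ltac:(lia)).
    pose proof (K 2%nat ltac:(lia)). pose proof (K 3%nat ltac:(lia)).
    pose proof (K 4%nat ltac:(lia)). pose proof (K 5%nat ltac:(lia)).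
    nra.
Qed.

Definition polc : policy := fun h e => if firstb h e then 1 else 0.

Lemma term_eq (b : bool) a c :
  (if b then 1 else 0) * (pR * (1 + Q2R a) + (1 - pR) * Q2R c)
  = Q2R (if b then valQ a c else 0%Q).
Proof. destruct b; [rewrite Q2R_valQ; ring | rewrite Q2R_0; ring]. Qed.

Lemma exp_c n h : exp_value pR n polc h = Q2R (evalQ n h).
Proof.
  revert h; induction n as [|n IH]; intro h.
  - simpl. rewrite Q2R_0; lra.
  - cbn [exp_value evalQ sum_f_R0]. rewrite !IH. unfold sumQ, polc.
    rewrite !term_eq, !Q2R_plus. reflexivity.
Qed.

Lemma polc_adm : admissible polc.
Proof.
  intro h. unfold polc, firstb. split; [|split].
  - intros e _. destruct (_ && _); lra.
  - intros e _ V. rewrite V. reflexivity.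
  - intros [e He]. simpl.
    assert (Hlt : (e < 6)%nat).
    { unfold valid in He. destruct (Nat.ltb e 6) eqn:L; [apply Nat.ltb_lt; exact L|discriminate]. }
    destruct (valid h 0) eqn:V0; destruct (valid h 1) eqn:V1; destruct (valid h 2) eqn:V2;
    destruct (valid h 3) eqn:V3; destruct (valid h 4) eqn:V4; destruct (valid h 5) eqn:V5;
    simpl; try lra;
    do 6 (destruct e as [|e]; [congruence|]); lia.
Qed.

Theorem lemma6 :
  let p := 64 / 100 in
  let v := p + p ^ 2 + (1 - p) * p * (1 + p) + (1 - p) ^ 2 * p * (1 + p)
           + (1 - p) ^ 3 * (1 - (1 - p) ^ 3) in
  (forall pol : policy, admissible pol -> expected_matching p pol <= v) /\
  (exists pol : policy, admissible pol /\ expected_matching p pol = v).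
Proof.
  intros p v.
  assert (Hv : v = Q2R (392569184 # 244140625)).
  { unfold v, p, Q2R; simpl. lra. }
  assert (Ho : optQ 6 [] = (392569184 # 244140625)%Q) by (vm_compute; reflexivity).
  assert (He : evalQ 6 [] = (392569184 # 244140625)%Q) by (vm_compute; reflexivity).
  split.
  - intros pol Hp. unfold expected_matching. rewrite Hv, <- Ho. apply (ub pol Hp).
  - exists polc. split; [apply polc_adm|]. unfold expected_matching.
    change p with pR. rewrite exp_c, He, Hv. reflexivity.
Qed.
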